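(* Let $K$ be a knot with Wirtinger presentation on $n$ generators, and set $S^k_K=V(E^k_K)\setminus V(E^{k+1}_K)\subset\mathbb C^*$ (a finite set for $k\ge1$). Then the class of the representation variety in the Grothendieck ring of complex algebraic varieties is $$[\mathcal R_{\mathrm{AGL}_1}(K)]=\mathbb L(\mathbb L-1)+\sum_{k=1}^{n-1}|S^k_K|\,(\mathbb L^{k+1}-\mathbb L),$$ where $\mathbb L=[\mathbb A^1_{\mathbb C}]$.
   Context: $\mathcal R_{\mathrm{AGL}_1}(K)=\mathrm{Hom}(\pi_1(S^3-K),\mathrm{AGL}_1(\mathbb C))$, $\mathrm{AGL}_1(\mathbb C)=\{\begin{pmatrix}1&0\\ a&t\end{pmatrix}: a\in\mathbb C,t\in\mathbb C^*\}$. Using Wirtinger generators $x_1,\dots,x_n$ with $\rho(x_i)=\begin{pmatrix}1&0\\ a_i&t\end{pmatrix}$ (common $t$), it is the subvariety of $\mathbb C^*\times\mathbb C^n$ given by $A_K(t)a=0$, where $A_K(t)$ is the $(n-1)\times n$ Alexander matrix (abelianized Fox derivatives of the Wirtinger relators). Elementary ideals: $E^k_K=0$ for $k\le 0$, generated by the $(n-k)$-minors of $A_K$ for $0<k\le n-1$, and the unit ideal for $k\ge n$; $V(E^k_K)\subset\mathbb C^*$ is its common zero set. *)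

(* Defs.v *)
From HB Require Import structures.
From mathcomp Require Import all_boot all_order all_algebra.
From mathcomp Require Import reals complex.
Set Implicit Arguments. Unset Strict Implicit. Unset Printing Implicit Defensive.
Import Order.TTheory GRing.Theory Num.Theory.
Local Open Scope ring_scope.

Definition pset (C : Type) (m : nat) := 'rV[C]_m -> Prop.

Inductive polyfun (C : comNzRingType) (m : nat) : ('rV[C]_m -> C) -> Prop :=
  | pf_const (c : C) : polyfun (fun _ => c)
  | pf_coord (i : 'I_m) : polyfun (fun x => x 0 i)
  | pf_add f g : polyfun f -> polyfun g -> polyfun (fun x => f x + g x)
  | pf_mul f g : polyfun f -> polyfun g -> polyfun (fun x => f x * g x).

Definition zclosed (C : comNzRingType) (m : nat) (Z : pset C m) : Prop :=
  exists (k : nat) (f : 'I_k -> 'rV[C]_m -> C),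
    (forall i, polyfun (f i)) /\ (forall x, Z x <-> forall i, f i x = 0).

(* locally closed subsets (= quasi-affine varieties, C algebraically closed) *)
Definition locally_closed (C : comNzRingType) (m : nat) (X : pset C m) : Prop :=
  exists Z W : pset C m, zclosed Z /\ zclosed W /\ (forall x, X x <-> Z x /\ ~ W x).

Definition rel_closed (C : comNzRingType) (m : nat) (Z X : pset C m) : Prop :=
  exists W : pset C m, zclosed W /\ (forall x, Z x <-> X x /\ W x).

Definition regular_on (C : fieldType) (m k : nat) (X : pset C m)
    (phi : 'rV[C]_m -> 'rV[C]_k) : Prop :=
  forall x, X x -> exists (p : 'I_k -> 'rV[C]_m -> C) (q : 'rV[C]_m -> C),
    (forall j, polyfun (p j)) /\ polyfun q /\ q x <> 0 /\
    (forall y, X y -> q y <> 0 -> forall j, phi y 0 j = p j y / q y).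

Definition var_iso (C : fieldType) (m k : nat) (X : pset C m) (Y : pset C k) : Prop :=
  exists (phi : 'rV[C]_m -> 'rV[C]_k) (psi : 'rV[C]_k -> 'rV[C]_m),
    regular_on X phi /\ regular_on Y psi /\
    (forall x, X x -> Y (phi x)) /\ (forall y, Y y -> X (psi y)) /\
    (forall x, X x -> psi (phi x) = x) /\ (forall y, Y y -> phi (psi y) = y).

(* An additive invariant (motivic measure) with values in an abelian group G:
   isomorphism invariant and satisfying the scissor relation
   [X] = [Z] + [X \ Z] for Z closed in X.  An identity holds in the Grothendieck
   group K_0(Var_C) iff it holds for every such invariant (universal property). *)
Definition additive_invariant (C : fieldType) (G : zmodType)
    (chi : forall m, pset C m -> G) : Prop :=
  (forall m k (X : pset C m) (Y : pset C k),
      locally_closed X -> locally_closed Y -> var_iso X Y -> chi m X = chi k Y) /\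
  (forall m (X Z : pset C m), locally_closed X -> rel_closed Z X ->
      chi m X = chi m Z + chi m (fun x => X x /\ ~ Z x)).

Definition affine_space (C : Type) (m : nat) : pset C m := fun _ => True.

(* A Wirtinger presentation on n generators (arcs x_0,...,x_{n-1}) comes from a
   diagram with n crossings; at crossing i the under-arc x_i continues as
   x_{i+1 mod n}, the over-arc is x_{over i}, and the sign is pos i; the relator is
   x_{i+1} = x_{over i}^e x_i x_{over i}^{-e} (e = +1 if pos i, -1 otherwise).
   The Alexander matrix uses the relators of crossings 0..n-2 (one relator is
   redundant).  Abelianized Fox derivatives (s = t^e):
      d/dx_{over i} : 1 - s,   d/dx_i : s,   d/dx_{i+1} : -1   (summed if indices coincide). *)
Definition crossing_of (n : nat) (i : 'I_n.-1) : 'I_n := widen_ord (leq_pred n) i.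

Definition alexander_matrix (C : fieldType) (n : nat) (over : 'I_n -> 'I_n)
    (pos : 'I_n -> bool) (t : C) : 'M[C]_(n.-1, n) :=
  \matrix_(i, j)
    (let c := crossing_of i in
     let s := if pos c then t else t^-1 in
     (if j == over c then 1 - s else 0) + (if (j : nat) == (c : nat) then s else 0)
     - (if (j : nat) == (c.+1 %% n)%N then 1 else 0)).

Definition minors_vanish (C : fieldType) (n : nat) (over : 'I_n -> 'I_n)
    (pos : 'I_n -> bool) (r : nat) (t : C) : Prop :=
  forall (f : 'I_r -> 'I_n.-1) (g : 'I_r -> 'I_n), injective f -> injective g ->
    \det (mxsub f g (alexander_matrix over pos t)) = 0.

(* V(E^k) in C^*: E^k = 0 for k <= 0, generated by the (n-k)-minors for
   0 < k <= n-1, and the unit ideal for k >= n *)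
Definition VE (C : fieldType) (n : nat) (over : 'I_n -> 'I_n)
    (pos : 'I_n -> bool) (k : nat) (t : C) : Prop :=
  t != 0 /\
  (if k == 0%N then True
   else if (n <= k)%N then False
   else minors_vanish over pos (n - k) t).

Definition SK (C : fieldType) (n : nat) (over : 'I_n -> 'I_n)
    (pos : 'I_n -> bool) (k : nat) (t : C) : Prop :=
  VE over pos k t /\ ~ VE over pos k.+1 t.

(* R_{AGL_1}(K) as a subset of C^{1+n}: coordinates (t, a_0, ..., a_{n-1}),
   t <> 0 and A_K(t) a = 0 *)
Definition rep_variety (C : fieldType) (n : nat) (over : 'I_n -> 'I_n)
    (pos : 'I_n -> bool) : pset C n.+1 :=
  fun x => let t := x 0 ord0 in
           t != 0 /\
           alexander_matrix over pos t *m (\col_j x 0 (lift ord0 j)) = 0.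

(* Main.v *)
Require Import Defs.
From HB Require Import structures.
From mathcomp Require Import all_boot all_order all_algebra.
From mathcomp Require Import reals complex.
From mathcomp Require Import ring zify.
From Stdlib Require Import FunctionalExtensionality PropExtensionality.
Import Order.TTheory GRing.Theory Num.Theory.
Local Open Scope ring_scope.
Set Implicit Arguments. Unset Strict Implicit. Unset Printing Implicit Defensive.



Section MatLemmas.
Variable F : fieldType.

Lemma widen_inj k K (h : (k <= K)%N) : injective (widen_ord h).
Proof. by move=> i j /(congr1 val) /= /val_inj. Qed.

Lemma rowsub_free k K n (M : 'M[F]_(K, n)) (f : 'I_k -> 'I_K) :
  injective f -> row_free M -> row_free (rowsub f M).
Proof.
move=> finj /row_freeP [B hB]; apply/row_freeP.
exists (B *m colsub f 1%:M); rewrite mulmxA mul_rowsub_mx hB.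
apply/matrixP => i j; rewrite !mxE.
rewrite (bigD1 (f i)) //= big1 ?addr0.
  by rewrite !mxE eqxx mul1r (inj_eq finj).
by move=> l hl; rewrite !mxE eq_sym (negPf hl) mul0r.
Qed.

Lemma minor_le_rank m n r (A : 'M[F]_(m, n)) (f : 'I_r -> 'I_m) (g : 'I_r -> 'I_n) :
  \det (mxsub f g A) != 0 -> (r <= \rank A)%N.
Proof.
move=> hd.
have hu : mxsub f g A \in unitmx by rewrite unitmxE unitfE.
rewrite -(mxrank_unit hu) mxsubrc.
apply: (leq_trans (mxrankS (rowsub_sub _ _))).
have -> : colsub g A = A *m colsub g 1%:M by rewrite mulmx_colsub mulmx1.
exact: mxrankM_maxl.
Qed.

Lemma rank_le_minor m n r (A : 'M[F]_(m, n)) :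
  (r <= \rank A)%N -> exists (f : 'I_r -> 'I_m) (g : 'I_r -> 'I_n),
    injective f /\ injective g /\ \det (mxsub f g A) != 0.
Proof.
move=> hr.
pose h := maxrankfun A.
pose f := fun i : 'I_r => h (widen_ord hr i).
have finj : injective f.
  by move=> i j /maxrankfun_inj /widen_inj.
pose B := rowsub f A.
have Bfree : row_free B.
  have -> : B = rowsub (widen_ord hr) (rowsub h A) by rewrite /B -rowsub_comp.
  apply: rowsub_free; [exact: widen_inj | exact: maxrowsub_free].
have eqr : \rank B^T = r by rewrite mxrank_tr; apply/eqP.
pose h2 := maxrankfun B^T.
pose g := fun i : 'I_r => h2 (cast_ord (esym eqr) i).
have ginj : injective g.
  by move=> i j /maxrankfun_inj /cast_ord_inj.
exists f, g; split => //; split => //.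
have Cfree : row_free (rowsub g B^T).
  have -> : rowsub g B^T = rowsub (cast_ord (esym eqr)) (rowsub h2 B^T).
    by rewrite -rowsub_comp.
  apply: rowsub_free; [exact: cast_ord_inj | exact: maxrowsub_free].
have -> : mxsub f g A = (rowsub g B^T)^T.
  by rewrite trmx_mxsub trmxK mxsubcr.
by rewrite det_tr -unitfE -unitmxE -row_free_unit.
Qed.

End MatLemmas.



Section Geo.
Variable C : fieldType.

Lemma polyfun_ext m (f g : 'rV[C]_m -> C) : (forall x, f x = g x) -> polyfun f -> polyfun g.
Proof. by move=> e; have -> : g = f by apply: functional_extensionality => x; rewrite e. Qed.

Lemma polyfun_cst m c : polyfun (fun _ : 'rV[C]_m => c). Proof. exact: pf_const. Qed.

Lemma polyfun_opp m (f : 'rV[C]_m -> C) : polyfun f -> polyfun (fun x => - f x).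
Proof.
move=> hf; apply: (@polyfun_ext _ (fun x => (-1) * f x)); first by move=> x; rewrite mulN1r.
exact: pf_mul (pf_const _ _) hf.
Qed.

Lemma polyfun_sub m (f g : 'rV[C]_m -> C) : polyfun f -> polyfun g -> polyfun (fun x => f x - g x).
Proof. by move=> hf hg; apply: pf_add => //; apply: polyfun_opp. Qed.

Lemma polyfun_sum m (I : Type) (r : seq I) (P : pred I) (F : I -> 'rV[C]_m -> C) :
  (forall i, polyfun (F i)) -> polyfun (fun x => \sum_(i <- r | P i) F i x).
Proof.
move=> hF; elim: r => [|a r IH].
  by apply: (@polyfun_ext _ (fun _ => 0)) => [x|]; [rewrite big_nil | exact: pf_const].
case hP: (P a).
  apply: (@polyfun_ext _ (fun x => F a x + \sum_(i <- r | P i) F i x)).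
    by move=> x; rewrite big_cons hP.
  exact: pf_add.
by apply: (polyfun_ext _ IH) => x; rewrite big_cons hP.
Qed.

Lemma polyfun_lin m p (idx : 'I_p -> 'I_m) (c : 'I_p -> C) :
  polyfun (fun x : 'rV[C]_m => \sum_k x 0 (idx k) * c k).
Proof.
apply: (@polyfun_sum m _ _ _ (fun k x => x 0 (idx k) * c k)) => k.
by apply: pf_mul; [exact: pf_coord | exact: pf_const].
Qed.

Lemma polyfun_prod m (I : Type) (r : seq I) (F : I -> 'rV[C]_m -> C) :
  (forall i, polyfun (F i)) -> polyfun (fun x => \prod_(i <- r) F i x).
Proof.
move=> hF; elim: r => [|a r IH].
  by apply: (@polyfun_ext _ (fun _ => 1)) => [x|]; [rewrite big_nil | exact: pf_const].
apply: (@polyfun_ext _ (fun x => F a x * \prod_(i <- r) F i x)).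
  by move=> x; rewrite big_cons.
exact: pf_mul.
Qed.

Lemma zclosed_fam m k (f : 'I_k -> 'rV[C]_m -> C) :
  (forall i, polyfun (f i)) -> zclosed (fun x => forall i, f i x = 0).
Proof. by move=> hf; exists k, f. Qed.

Lemma zclosed_one m (f : 'rV[C]_m -> C) : polyfun f -> zclosed (fun x => f x = 0).
Proof.
move=> hf; exists 1%N, (fun _ => f); split => // x; split => [h _|h]; first exact: h.
exact: h ord0.
Qed.

Lemma zclosed_True m : zclosed (fun _ : 'rV[C]_m => True).
Proof. by exists 0%N, (fun _ _ => 0); split => [[]//|x]; split => // _ []. Qed.

Lemma zclosed_ext m (Z Z' : pset C m) : (forall x, Z x <-> Z' x) -> zclosed Z -> zclosed Z'.
Proof.
move=> e [k [f [hf hZ]]]; exists k, f; split => // x; rewrite -e; exact: hZ.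
Qed.

Lemma zclosed_and m (Z1 Z2 : pset C m) : zclosed Z1 -> zclosed Z2 ->
  zclosed (fun x => Z1 x /\ Z2 x).
Proof.
move=> [k1 [f1 [hf1 h1]]] [k2 [f2 [hf2 h2]]].
exists (k1 + k2)%N, (fun i => match split i with inl a => f1 a | inr b => f2 b end).
split; first by move=> i; case: (split i).
move=> x; rewrite h1 h2; split.
  by move=> [H1 H2] i; case: (split i).
move=> H; split.
  by move=> a; have := H (unsplit (inl a)); rewrite unsplitK.
by move=> b; have := H (unsplit (inr b)); rewrite unsplitK.
Qed.

Lemma zclosed_eq m (t : C) : zclosed (fun x : 'rV[C]_m.+1 => x 0 0 = t).
Proof.
apply: (@zclosed_ext _ (fun x => x 0 0 - t = 0)); first by move=> x; split => [/eqP|->]; [rewrite subr_eq0 => /eqP | rewrite subrr].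
apply: zclosed_one; apply: polyfun_sub; [exact: pf_coord | exact: pf_const].
Qed.

Lemma zclosed_in m (T : seq C) : zclosed (fun x : 'rV[C]_m.+1 => x 0 0 \in T).
Proof.
apply: (@zclosed_ext _ (fun x => \prod_(t <- T) (x 0 0 - t) = 0)).
  move=> x; split => [/eqP|h].
    by rewrite prodf_seq_eq0 => /hasP [t ht /=]; rewrite subr_eq0 => /eqP ->.
  by apply/eqP; rewrite prodf_seq_eq0; apply/hasP; exists (x 0 0) => //; rewrite /= subrr.
apply: zclosed_one; apply: polyfun_prod => t; apply: polyfun_sub; [exact: pf_coord | exact: pf_const].
Qed.

Lemma lc_ext m (X Y : pset C m) : (forall x, X x <-> Y x) -> locally_closed X -> locally_closed Y.
Proof. by move=> e [Z [W [hZ [hW h]]]]; exists Z, W; split => // ; split => // x; rewrite -e. Qed.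

Lemma lc_open m (Z : pset C m) (w : 'rV[C]_m -> C) : zclosed Z -> polyfun w ->
  locally_closed (fun x => Z x /\ w x != 0).
Proof.
move=> hZ hw; exists Z, (fun x => w x = 0); split => //; split; first exact: zclosed_one.
by move=> x; split => [[? /eqP]|[? /eqP]].
Qed.

Lemma lc_affine m : locally_closed (@affine_space C m).
Proof.
apply: (@lc_ext _ (fun x => True /\ (fun _ => 1) x != 0)); last by apply: lc_open; [exact: zclosed_True|exact: pf_const].
by move=> x; rewrite oner_eq0.
Qed.

Lemma lc_and m (S Z : pset C m) : locally_closed S -> zclosed Z ->
  locally_closed (fun x => S x /\ Z x).
Proof.
move=> [Z0 [W [hZ0 [hW h]]]] hZ; exists (fun x => Z0 x /\ Z x), W; split; first exact: zclosed_and.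
split => // x; rewrite h; tauto.
Qed.

Lemma relc_and m (S Z : pset C m) : zclosed Z -> rel_closed (fun x => S x /\ Z x) S.
Proof. by move=> hZ; exists Z; split. Qed.

Lemma regular_poly m k (X : pset C m) (phi : 'rV[C]_m -> 'rV[C]_k) :
  (forall j, polyfun (fun y => phi y 0 j)) -> regular_on X phi.
Proof.
move=> hp x _; exists (fun j y => phi y 0 j), (fun _ => 1); split => //; split; first exact: pf_const.
by split; [exact/eqP/oner_neq0 | move=> y _ _ j; rewrite divr1].
Qed.

Variable G : zmodType.
Variable chi : forall m, pset C m -> G.
Hypothesis hchi : additive_invariant chi.

Lemma chi_ext m (X Y : pset C m) : (forall x, X x <-> Y x) -> chi X = chi Y.
Proof.
move=> e; have -> : X = Y; last by [].
by apply: functional_extensionality => x; apply: propositional_extensionality.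
Qed.

Lemma chi_iso m k (X : pset C m) (Y : pset C k) :
  locally_closed X -> locally_closed Y -> var_iso X Y -> chi X = chi Y.
Proof. by case: hchi => h _; apply: h. Qed.

Lemma chi_scissor m (X Z : pset C m) : locally_closed X -> rel_closed Z X ->
  chi X = chi Z + chi (fun x => X x /\ ~ Z x).
Proof. by case: hchi => _ h; apply: h. Qed.

Lemma chi_empty m : chi (fun _ : 'rV[C]_m => False) = 0.
Proof.
have lc0 : locally_closed (fun _ : 'rV[C]_m => False).
  apply: (@lc_ext _ (fun x => True /\ (fun _ => 0) x != 0)); last by apply: lc_open; [exact: zclosed_True|exact: pf_const].
  by move=> x; rewrite eqxx; split => // [[]].
have hr : rel_closed (fun _ : 'rV[C]_m => False) (fun _ => False).
  by exists (fun _ => True); split; [exact: zclosed_True | move=> x; tauto].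
have := @chi_scissor _ _ (fun _ => False) lc0 hr.
rewrite (@chi_ext _ (fun x => False /\ ~ False) (fun _ => False)); last by move=> x; tauto.
by move/eqP; rewrite -subr_eq subrr eq_sym => /eqP.
Qed.

Lemma chi_fib m (S : pset C m.+1) (T : seq C) : locally_closed S -> uniq T ->
  chi (fun x => S x /\ x 0 0 \in T) = \sum_(t <- T) chi (fun x => S x /\ x 0 0 = t).
Proof.
move=> hS; elim: T => [_|a T IH /andP [haT hu]].
  by rewrite big_nil -(chi_empty m.+1); apply: chi_ext => x; rewrite in_nil; split => [[]|].
rewrite big_cons -IH //.
have lcX := lc_and hS (zclosed_in m (a :: T)).
rewrite (chi_scissor lcX (relc_and _ (zclosed_eq m a))).
congr (_ + _); apply: chi_ext => x; rewrite in_cons.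
  split; first by move=> [[h1 _] h2].
  by move=> [h1 h2]; split => //; split => //; rewrite h2 eqxx.
split.
  move=> [[h1 /orP [/eqP h|h]] h2]; first by exfalso; apply: h2; split => //; rewrite h eqxx.
  by split.
move=> [h1 h2]; split; first by rewrite h2 orbT.
by move=> [[_ _] e]; move: haT; rewrite -e h2.
Qed.

End Geo.



Section Alex.
Variable F : fieldType.
Variable n : nat.
Hypothesis hn : (0 < n)%N.
Variable over : 'I_n -> 'I_n.
Variable pos : 'I_n -> bool.

Local Notation A t := (alexander_matrix over pos t).
Local Notation rep := (@rep_variety F n over pos).

Lemma sum_ind_nat (a : F) k : (k < n)%N ->
  \sum_(j < n) (if (j : nat) == k then a else 0) = a.
Proof.
move=> hk; rewrite (bigD1 (Ordinal hk)) //= eqxx big1 ?addr0 // => j hj.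
case: eqP => // e; exfalso; move/negP: hj; apply; apply/eqP/val_inj; exact: e.
Qed.

Lemma rowsum0 (t : F) i : \sum_j A t i j = 0.
Proof.
under eq_bigr do rewrite mxE.
rewrite sumrB big_split /=.
rewrite (bigD1 (over (crossing_of i))) //= eqxx big1 ?addr0; last by move=> j /negPf ->.
rewrite (@sum_ind_nat _ i) ?(leq_trans (ltn_ord i) (leq_pred n)) //.
by rewrite sum_ind_nat ?ltn_pmod // subrK subrr.
Qed.

Lemma mul_const0 (t c : F) : A t *m (const_mx c : 'cV_n) = 0.
Proof.
apply/matrixP => i j; rewrite [LHS]mxE [RHS]mxE.
under eq_bigr => k _ do rewrite [const_mx _ _ _]mxE.
by rewrite -mulr_suml rowsum0 mul0r.
Qed.

Definition Ap : 'M[{poly F}]_(n.-1, n) :=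
  \matrix_(i, j)
    (let c := crossing_of i in
     let ts := if pos c then 'X * 'X else 1 in
     (if j == over c then 'X - ts else 0) + (if (j : nat) == (c : nat) then ts else 0)
     - (if (j : nat) == (c.+1 %% n)%N then 'X else 0)).

Lemma Ap_eval (t : F) i j : t != 0 -> (Ap i j).[t] = t * A t i j.
Proof.
move=> ht; rewrite !mxE /=.
case: (pos _); case: (j == _); case: (_ == _); case: (_ == _);
  by rewrite !hornerE /=; field.
Qed.

Definition wcol := widen_ord (leq_pred n).

Definition Pdet : {poly F} := \det (colsub wcol Ap).

Lemma Pdet_eval (t : F) : t != 0 -> Pdet.[t] = t ^+ n.-1 * \det (colsub wcol (A t)).
Proof.
move=> ht; rewrite /Pdet -horner_evalE -det_map_mx map_mxsub -detZ.
congr (\det _); apply/matrixP => i j.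
have := Ap_eval i (wcol j) ht; rewrite !mxE /= !horner_evalE; exact.
Qed.

Lemma A1_entry (i j : 'I_n.-1) :
  A 1 i (wcol j) = (if (j : nat) == i then 1 else 0 : F) - (if (j : nat) == i.+1 then 1 else 0).
Proof.
rewrite mxE /= invr1; case: (pos _); rewrite subrr if_same add0r modn_small //;
  by have := ltn_ord i; rewrite -ltnS prednK.
Qed.

Lemma A1T (i j : 'I_n.-1) :
  (colsub wcol (A 1))^T i j = (if (i : nat) == j then 1 else 0 : F) - (if (i : nat) == j.+1 then 1 else 0).
Proof. by rewrite !mxE -A1_entry !mxE. Qed.

Lemma Pdet1 : Pdet.[1] = 1.
Proof.
rewrite Pdet_eval ?oner_neq0 // expr1n mul1r -det_tr det_trig.
  apply: big1 => i _; rewrite A1T eqxx.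
  by rewrite ltn_eqF // subr0.
apply/is_trig_mxP => i j hij; rewrite A1T.
by rewrite ltn_eqF // ltn_eqF ?subrr // (ltn_trans hij (ltnSn j)).
Qed.


Lemma Pdet_neq0 : Pdet != 0.
Proof. by apply/eqP => h; have := Pdet1; rewrite h horner0 => /eqP; rewrite eq_sym oner_eq0. Qed.

Lemma bad_root (t : F) : t != 0 -> (\rank (A t) < n.-1)%N -> Pdet.[t] = 0.
Proof.
move=> ht hr; rewrite Pdet_eval //.
have [-> |hd] := eqVneq (\det (colsub wcol (A t))) 0; first by rewrite mulr0.
by have := minor_le_rank hd; rewrite leqNgt hr.
Qed.

Lemma minors_vanishP r (t : F) : minors_vanish over pos r t <-> (\rank (A t) < r)%N.
Proof.
split => [h|h f g _ _].
  rewrite ltnNge; apply/negP => /rank_le_minor [f [g [hf [hg hd]]]].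
  by move: hd; rewrite h // eqxx.
apply/eqP; apply: contraTT h => hd; rewrite -leqNgt; exact: minor_le_rank hd.
Qed.

Definition gpoly (i : 'I_n.-1) (x : 'rV[F]_n.+1) : F :=
  \sum_j (Ap i j).[x 0 0] * x 0 (lift ord0 j).

Lemma polyfun_horner m (p : {poly F}) (f : 'rV[F]_m -> F) : polyfun f -> polyfun (fun x => p.[f x]).
Proof.
move=> hf.
have hX k : polyfun (fun x => f x ^+ k).
  elim: k => [|k IH]; first by apply: (polyfun_ext (f := fun _ => 1)) => [x|]; [rewrite expr0 | exact: pf_const].
  by apply: (polyfun_ext (f := fun x => f x * f x ^+ k)) => [x|]; [rewrite exprS | exact: pf_mul].
apply: (polyfun_ext (f := fun x => \sum_(i < size p) p`_i * f x ^+ i)); first by move=> x; rewrite horner_coef.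
by apply: polyfun_sum => i; apply: pf_mul; [exact: pf_const | exact: hX].
Qed.

Lemma polyfun_gpoly i : polyfun (gpoly i).
Proof.
apply: polyfun_sum => j; apply: pf_mul; [apply: polyfun_horner; exact: pf_coord | exact: pf_coord].
Qed.

Lemma gpoly_eq i (x : 'rV[F]_n.+1) : x 0 0 != 0 ->
  gpoly i x = x 0 0 * (A (x 0 0) *m \col_j x 0 (lift ord0 j)) i 0.
Proof.
move=> ht; rewrite /gpoly [in RHS]mxE mulr_sumr; apply: eq_bigr => j _.
rewrite Ap_eval // mulrA; congr (_ * _); exact: esym (mxE _ _ j 0).
Qed.

Lemma rep_iff (x : 'rV[F]_n.+1) : rep x <-> (forall i, gpoly i x = 0) /\ x 0 0 != 0.
Proof.
rewrite /rep_variety /=; split.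
  by move=> [ht hA]; split => // i; rewrite gpoly_eq // hA mxE mulr0.
move=> [hg ht]; split => //; apply/matrixP => i j; rewrite ord1 [RHS]mxE.
have := hg i; rewrite gpoly_eq // => /eqP; rewrite mulf_eq0 (negPf ht) /= => /eqP.
by [].
Qed.

Lemma lc_rep : locally_closed (rep).
Proof.
apply: (lc_ext (X := fun x : 'rV[F]_n.+1 => (fun x => forall i, gpoly i x = 0) x /\ (fun x : 'rV[F]_n.+1 => x 0 0) x != 0)).
  by move=> x; rewrite rep_iff.
apply: lc_open; [apply: zclosed_fam; exact: polyfun_gpoly | exact: pf_coord].
Qed.

Definition aofr (x : 'rV[F]_n.+1) : 'rV[F]_n := \row_j x 0 (lift ord0 j).
Definition mk (t : F) (v : 'rV[F]_n) : 'rV[F]_n.+1 :=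
  \row_j (oapp (fun j' => v 0 j') t (unlift ord0 j)).

Lemma col_aof (x : 'rV[F]_n.+1) : \col_j x 0 (lift ord0 j) = (aofr x)^T.
Proof. by apply/matrixP => i j; rewrite !mxE. Qed.

Lemma mk0 t v : mk t v 0 0 = t.
Proof. by rewrite mxE unlift_none. Qed.

Lemma mk0' t v : mk t v 0 ord0 = t.
Proof. exact: mk0. Qed.

Lemma aofrE (x : 'rV[F]_n.+1) j : aofr x 0 j = x 0 (lift ord0 j).
Proof. exact: mxE. Qed.

Lemma mk_lift t v j : mk t v 0 (lift ord0 j) = v 0 j.
Proof. by rewrite mxE liftK. Qed.

Lemma aof_mk t v : aofr (mk t v) = v.
Proof. by apply/rowP => j; rewrite !mxE liftK. Qed.

Lemma mk_eta (x : 'rV[F]_n.+1) : mk (x 0 0) (aofr x) = x.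
Proof.
apply/rowP => j; rewrite mxE; case: unliftP => [j'|] -> /=; last by [].
by rewrite mxE.
Qed.

Lemma kerP (t : F) (v : 'rV[F]_n) : A t *m v^T = 0 <-> (v <= kermx (A t)^T)%MS.
Proof.
have e : (v *m (A t)^T)^T = A t *m v^T by rewrite trmx_mul trmxK.
split => [h|/sub_kermxP h]; first by apply/sub_kermxP; apply: trmx_inj; rewrite e h trmx0.
by rewrite -e h trmx0.
Qed.

Lemma rep_ker (x : 'rV[F]_n.+1) : rep x <-> x 0 0 != 0 /\ (aofr x <= kermx (A (x 0 0))^T)%MS.
Proof. by rewrite /rep_variety col_aof kerP. Qed.

Lemma ker_const (t : F) (a : 'rV[F]_n) : t != 0 -> ~~ (\rank (A t) < n.-1)%N ->
  (a <= kermx (A t)^T)%MS -> forall j, a 0 j = a 0 (Ordinal hn).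
Proof.
move=> ht hr ha.
pose one : 'rV[F]_n := const_mx 1.
have h1 : (one <= kermx (A t)^T)%MS.
  apply/kerP; have -> : one^T = const_mx 1 by apply/matrixP => i j; rewrite !mxE.
  exact: mul_const0.
have rk1 : \rank one = 1%N.
  rewrite rank_rV; case: eqP => // /rowP /(_ (Ordinal hn)); rewrite !mxE => /eqP.
  by rewrite oner_eq0.
have rK : \rank (kermx (A t)^T) = 1%N.
  rewrite mxrank_ker mxrank_tr.
  have := rank_leq_row (A t); move: hr; rewrite -ltnNge ltnS => h1' h2'.
  have -> : \rank (A t) = n.-1 by apply/eqP; rewrite eqn_leq h1' h2'.
  by rewrite -{1}(prednK hn) subSnn.
have hK : (kermx (A t)^T <= one)%MS.
  by rewrite -(mxrank_leqif_sup h1).2 rK rk1.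
have /submxP [D ->] : (a <= one)%MS by apply: submx_trans hK.
move=> j; rewrite !mxE; apply: eq_bigr => k _; rewrite !mxE //.
Qed.

Lemma prod_in (T : seq F) (y : F) : (\prod_(t <- T) (y - t) == 0) = (y \in T).
Proof.
rewrite prodf_seq_eq0; apply/hasP/idP => [[t ht /=]|h].
  by rewrite subr_eq0 => /eqP ->.
by exists y => //=; rewrite subrr.
Qed.

Section Chi.
Variable G : zmodType.
Variable chi : forall m, pset F m -> G.
Hypothesis hchi : additive_invariant chi.

Lemma chi_fiber (t0 : F) : t0 != 0 ->
  chi (fun x => rep x /\ x 0 0 = t0) = chi (@affine_space F (n - \rank (A t0))).
Proof.
move=> ht0.
pose K := kermx (A t0)^T.
pose B := row_base K.
have rB : \rank K = (n - \rank (A t0))%N by rewrite mxrank_ker mxrank_tr.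
rewrite -rB.
have memF x : (rep x /\ x 0 0 = t0) <-> (x 0 0 = t0 /\ (aofr x <= B)%MS).
  rewrite rep_ker /B eq_row_base /K; split => [[[_ h] e]|[e h]]; first by rewrite -e.
  by split => //; split; [rewrite e | rewrite e].
apply: chi_iso => //.
- apply: lc_and; [exact: lc_rep | exact: zclosed_eq].
- exact: lc_affine.
exists (fun x => aofr x *m pinvmx B), (fun u => mk t0 (u *m B)).
split.
  apply: regular_poly => j.
  apply: (polyfun_ext (f := fun x => \sum_k x 0 (lift ord0 k) * pinvmx B k j)).
    by move=> x; rewrite !mxE; apply: eq_bigr => k _; congr (_ * _); exact: esym (mxE _ _ 0 k).
  exact: polyfun_lin.
split.
  apply: regular_poly => j.
  case hj: (unlift ord0 j) => [j'|].
    apply: (polyfun_ext (f := fun u => \sum_k u 0 (id k) * B k j')).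
      by move=> u; rewrite mxE hj /= mxE.
    exact: polyfun_lin.
  by apply: (polyfun_ext (f := fun _ => t0)) => [u|]; [rewrite mxE hj | exact: pf_const].
split; first by [].
split.
  by move=> u _; apply/memF; rewrite mk0 aof_mk submxMl.
split.
  move=> x /memF [e h]; rewrite (mulmxKpV h) -{2}(mk_eta x) e //.
move=> u _; rewrite aof_mk; apply: (row_free_inj (row_base_free K)).
by rewrite mulmxKpV // submxMl.
Qed.


Lemma chi_compl (T : seq F) :
  (forall t, t != 0 -> t \notin T -> ~~ (\rank (A t) < n.-1)%N) ->
  chi (fun x => rep x /\ x 0 0 \notin T) =
  chi (fun y : 'rV[F]_2 => y 0 0 != 0 /\ y 0 0 \notin T).
Proof.
move=> hT.
pose j0 := Ordinal hn.
have pw m : polyfun (fun x : 'rV[F]_m.+1 => x 0 0 * \prod_(t <- T) (x 0 0 - t)).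
  apply: pf_mul; first exact: pf_coord.
  by apply: polyfun_prod => t; apply: polyfun_sub; [exact: pf_coord | exact: pf_const].
have ew (y : F) : (y * \prod_(t <- T) (y - t) != 0) = (y != 0) && (y \notin T).
  by rewrite mulf_eq0 negb_or prod_in.
apply: chi_iso => //.
- apply: (lc_ext (X := fun x : 'rV[F]_n.+1 => (fun x => forall i, gpoly i x = 0) x /\
      (fun x : 'rV[F]_n.+1 => x 0 0 * \prod_(t <- T) (x 0 0 - t)) x != 0)).
    move=> x /=; rewrite ew rep_iff; split; first by move=> [h /andP [h1 h2]].
    by move=> [[h h1] h2]; split => //; rewrite h1.
  by apply: lc_open; [apply: zclosed_fam; exact: polyfun_gpoly | exact: pw].
- apply: (lc_ext (X := fun y : 'rV[F]_2 => (fun _ => True) y /\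
      (fun y : 'rV[F]_2 => y 0 0 * \prod_(t <- T) (y 0 0 - t)) y != 0)).
    by move=> y /=; rewrite ew; split; [move=> [_ /andP]| move=> [h1 h2]; rewrite h1].
  by apply: lc_open; [exact: zclosed_True | exact: pw].
exists (fun x => \row_(j < 2) (if j == 0 then x 0 0 else x 0 (lift ord0 j0))),
       (fun y => mk (y 0 0) (const_mx (y 0 1))).
split.
  apply: regular_poly => j; case hj: (j == 0).
    by apply: (polyfun_ext (f := fun x => x 0 0)) => [x|]; [rewrite mxE hj | exact: pf_coord].
  by apply: (polyfun_ext (f := fun x => x 0 (lift ord0 j0))) => [x|]; [rewrite mxE hj | exact: pf_coord].
split.
  apply: regular_poly => j; case hj: (unlift ord0 j) => [j'|].
    by apply: (polyfun_ext (f := fun y => y 0 1)) => [y|]; [rewrite mxE hj /= mxE | exact: pf_coord].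
  by apply: (polyfun_ext (f := fun y => y 0 0)) => [y|]; [rewrite mxE hj | exact: pf_coord].
split; first by move=> x [/rep_ker [h _] hxT]; rewrite mxE eqxx; split.
split.
  move=> y [h1 h2]; rewrite mk0; split => //; apply/rep_ker; rewrite mk0 aof_mk; split => //.
  apply/kerP; have -> : (const_mx (y 0 1) : 'rV[F]_n)^T = const_mx (y 0 1).
    by apply/matrixP => i j; rewrite !mxE.
  exact: mul_const0.
split.
  move=> x [hx hxT]; have /rep_ker [hx0 hk] := hx.
  have hc := ker_const hx0 (hT _ hx0 hxT) hk.
  apply/rowP => j; case: (unliftP ord0 j) => [j'|] ->; last by rewrite mk0' mxE eqxx.
  rewrite mk_lift mxE mxE /=.
  by have := hc j'; rewrite !aofrE.
move=> y _; apply/rowP => j; rewrite mxE.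
have : (j == 0) || (j == 1) by case: j => [[|[|k]]].
case/orP => /eqP ->; first by rewrite eqxx mk0.
by rewrite /= mxE liftK /= mxE.
Qed.

Lemma chi_line (t : F) :
  chi (fun y : 'rV[F]_2 => affine_space y /\ y 0 0 = t) = chi (@affine_space F 1).
Proof.
apply: chi_iso => //.
- by apply: lc_and; [exact: lc_affine | exact: zclosed_eq].
- exact: lc_affine.
exists (fun y => \row_(j < 1) y 0 1), (fun u => \row_(j < 2) (if j == 0 then t else u 0 0)).
split.
  apply: regular_poly => j.
  by apply: (polyfun_ext (f := fun y => y 0 1)) => [y|]; [rewrite mxE | exact: pf_coord].
split.
  apply: regular_poly => j; case hj: (j == 0).
    by apply: (polyfun_ext (f := fun _ => t)) => [y|]; [rewrite mxE hj | exact: pf_const].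
  by apply: (polyfun_ext (f := fun y => y 0 0)) => [y|]; [rewrite mxE hj | exact: pf_coord].
split; first by [].
split; first by move=> u _; split => //; rewrite mxE eqxx.
split.
  move=> y [_ e]; apply/rowP => j; rewrite mxE.
  have : (j == 0) || (j == 1) by case: j => [[|[|k]]].
  by case/orP => /eqP ->; rewrite ?eqxx ?e // mxE.
by move=> u _; apply/rowP => j; rewrite ord1 !mxE.
Qed.
End Chi.
End Alex.



Lemma comb_sum (G : zmodType) (I : eqType) (c : nat -> G) (g : I -> nat) (T : seq I) (n : nat) :
  (forall t, t \in T -> (1 <= g t < n)%N) ->
  \sum_(1 <= k < n) c k *+ size [seq t <- T | g t == k] = \sum_(t <- T) c (g t).
Proof.
under eq_bigr do rewrite size_filter.
elim: T => [_|a T IH hT].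
  by rewrite big_nil big1 // => k _; rewrite mulr0n.
rewrite big_cons -IH; last by move=> t ht; apply: hT; rewrite in_cons ht orbT.
under eq_bigr do rewrite /= mulrnDr.
rewrite big_split /=; congr (_ + _).
have ha : g a \in index_iota 1 n by rewrite mem_index_iota; apply: hT; rewrite in_cons eqxx.
rewrite (bigD1_seq (g a) ha (iota_uniq _ _)) /= eqxx mulr1n big1 ?addr0 //.
by move=> k /negPf; rewrite eq_sym => ->; rewrite mulr0n.
Qed.

Unset Implicit Arguments.

Theorem mainTheorem4 (R : realType) (n : nat) (hn : (0 < n)%N)
    (over : 'I_n -> 'I_n) (pos : 'I_n -> bool) :
  exists s : nat -> seq R[i],
    (forall k, (1 <= k <= n.-1)%N ->
       uniq (s k) /\ forall t : R[i], t \in s k <-> SK over pos k t) /\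
    forall (G : zmodType) (chi : forall m, pset R[i] m -> G),
      additive_invariant chi ->
      chi n.+1 (rep_variety over pos) =
        chi 2%N (@affine_space R[i] 2) - chi 1%N (@affine_space R[i] 1)
        + \sum_(1 <= k < n) (chi k.+1 (@affine_space R[i] k.+1)
                             - chi 1%N (@affine_space R[i] 1)) *+ size (s k).
Proof.
pose A (t : R[i]) := alexander_matrix over pos t.
pose P := Pdet R[i] over pos.
have hP : P != 0 := Pdet_neq0 R[i] hn over pos.
have [r hr] := closed_field_poly_normal P.
pose bad (t : R[i]) := (t != 0) && (\rank (A t) < n.-1)%N.
pose T := undup [seq t <- r | bad t].
have memT t : (t \in T) = bad t.
  rewrite mem_undup mem_filter; apply/andP/idP => [[]//|hb]; split => //.
  move/andP: hb => [h0 hr'].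
  have := bad_root h0 hr'; rewrite -/P.
  rewrite {1}hr hornerZ => /eqP; rewrite mulf_eq0 lead_coef_eq0 (negPf hP) /=.
  by rewrite -root_prod_XsubC.
pose g t := (n - \rank (A t)).-1.
exists (fun k => [seq t <- T | g t == k]).
split.
  move=> k /andP [hk1 hk2]; split; first by rewrite filter_uniq // undup_uniq.
  move=> t; rewrite mem_filter memT /SK /VE /bad /g.
  have hrk := rank_leq_row (A t).
  rewrite (_ : (k == 0)%N = false); last by move: hk1 hk2; case: k.
  rewrite (_ : (n <= k)%N = false); last by apply/negbTE; rewrite -ltnNge; lia.
  rewrite /= -/(A t).
  case: (leqP n k.+1) => hnk.
    rewrite minors_vanishP -/(A t); split.
      move=> /andP [/eqP hg /andP [h0 hb]]; split => //; [split => //; lia | by move=> [_]].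
    move=> [[h0 hm] _]; rewrite h0 /=; apply/andP; split; [apply/eqP|]; lia.
  rewrite !minors_vanishP -/(A t); split.
    move=> /andP [/eqP hg /andP [h0 hb]]; split; [split => //; lia | move=> [_ h]; lia].
  move=> [[h0 hm] hn']; rewrite h0 /=.
  have h2 : ~~ (\rank (A t) < n - k.+1)%N by apply/negP => h; apply: hn'.
  apply/andP; split; [apply/eqP|]; lia.
move=> G chi hchi.
have lcR := lc_rep R[i] over pos.
have hT t : t != 0 -> t \notin T -> ~~ (\rank (A t) < n.-1)%N.
  by move=> h0; rewrite memT /bad h0.
pose Y := fun y : 'rV[R[i]]_2 => y 0 0 != 0 /\ y 0 0 \notin T.
have e1 : chi n.+1 (rep_variety over pos) =
    \sum_(t <- T) chi _ (@affine_space R[i] (n - \rank (A t))) + chi 2 Y.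
  rewrite (chi_scissor hchi lcR (relc_and _ (zclosed_in n T))) (chi_fib hchi lcR (undup_uniq _)).
  congr (_ + _).
    apply: eq_big_seq => t; rewrite memT => /andP [h0 _]; exact: chi_fiber.
  rewrite -(chi_compl hn hchi hT); apply: chi_ext => x; split.
    by move=> [h1 h2]; split => //; apply/negP => h; apply: h2.
  by move=> [h1 h2]; split => // [[_ h]]; rewrite h in h2.
have e2 : chi 2 (@affine_space R[i] 2) = \sum_(t <- 0 :: T) chi 1 (@affine_space R[i] 1) + chi 2 Y.
  have hu : uniq (0 :: T) by rewrite /= undup_uniq andbT memT /bad eqxx.
  rewrite (chi_scissor hchi (lc_affine _ _) (relc_and _ (zclosed_in 1 (0 :: T)))).
  rewrite (chi_fib hchi (lc_affine _ 2) hu).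
  congr (_ + _).
    apply: eq_bigr => t _; exact: chi_line.
  apply: chi_ext => y; rewrite /Y in_cons; split.
    by move=> [_ h]; split; apply/negP => h'; apply: h; split => //; rewrite h' ?orbT.
  by move=> [h1 h2]; split => // [[_ /orP [] h]]; [rewrite h in h1 | rewrite h in h2].
rewrite comb_sum; last first.
  move=> t; rewrite memT => /andP [_ hb]; rewrite /g; lia.
have e3 : \sum_(t <- T) (chi (g t).+1 (@affine_space R[i] (g t).+1) - chi 1 (@affine_space R[i] 1)) =
    \sum_(t <- T) chi _ (@affine_space R[i] (n - \rank (A t))) - \sum_(t <- T) chi 1 (@affine_space R[i] 1).
  rewrite sumrB; congr (_ - _); apply: eq_big_seq => t; rewrite memT => /andP [_ hb].
  by rewrite /g prednK //; lia.
rewrite e3 e1.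
have -> : chi 2 Y = chi 2 (@affine_space R[i] 2) - \sum_(t <- 0 :: T) chi 1 (@affine_space R[i] 1).
  by rewrite e2 [_ + chi 2 Y]addrC addrK.
rewrite big_cons.
set a := \sum_(t <- T) _; set b := \sum_(t <- T) _; set c := chi 2 _; set d := chi 1 _.
by rewrite opprD (addrCA a c) -[RHS]addrA (addrCA a (-d)).
Qed.
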